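(* For all integers $i\geq 1$, \[ v_3(a_i+1)=\begin{cases} 0, & i\equiv 0,1,2,3,5,6,7 \pmod 8;\\ 1, & i\equiv 4 \text{ or } 12 \pmod{24};\\ v_3(i+4)+1, & i\equiv 20\pmod{24}. \end{cases} \]
   Context: The Narayana sequence $(a_n)_{n\geq 0}$ is defined by $a_0=0$, $a_1=a_2=1$ and $a_n=a_{n-1}+a_{n-3}$ for all $n\geq 3$. For a nonzero integer $x$, $v_3(x)$ denotes the $3$-adic valuation of $x$ (the exponent of the largest power of $3$ dividing $x$). *)

(* Defs.v *)
From mathcomp Require Import all_boot.
Set Implicit Arguments. Unset Strict Implicit. Unset Printing Implicit Defensive.

(* Narayana sequence: a_0 = 0, a_1 = a_2 = 1, a_n = a_(n-1) + a_(n-3) (n >= 3).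
   narayana_trip n = (a_n, a_(n+1), a_(n+2)). *)
Fixpoint narayana_trip (n : nat) : nat * nat * nat :=
  match n with
  | 0 => (0, 1, 1)
  | m.+1 => let: (x, y, z) := narayana_trip m in (y, z, z + x)
  end.

Definition narayana (n : nat) : nat := (narayana_trip n).1.1.

Lemma narayana_check :
  [seq narayana n | n <- iota 0 10] = [:: 0; 1; 1; 1; 2; 3; 4; 6; 9; 13].
Proof. by []. Qed.

Lemma narayana_rec n : narayana n.+3 = narayana n.+2 + narayana n.
Proof.
rewrite /narayana /=; case: (narayana_trip n) => [[x y] z] /=; by [].
Qed.

(* Main.v *)
Require Import Defs.
From Stdlib Require Import ZArith Lia.
From mathcomp Require Import all_boot zify.

Lemma logn3 k u : ~~ (3 %| u) -> logn 3 (3 ^ k * u) = k.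
Proof.
move=> h; have cu : coprime 3 u by rewrite prime_coprime.
by rewrite mulnC logn_Gauss // pfactorK.
Qed.

Lemma logn3_0 x : x %% 9 %% 3 != 0 -> logn 3 x = 0.
Proof.
move=> h; apply: logn_coprime; rewrite prime_coprime //.
by rewrite /dvdn -(modn_dvdm x (isT : 3 %| 9)).
Qed.

Lemma logn3_1 x : (x %% 9 == 3) || (x %% 9 == 6) -> logn 3 x = 1.
Proof.
move=> h; have exq : x = 3 ^ 1 * (3 * (x %/ 9) + (x %% 9) %/ 3).
  rewrite {1}(divn_eq x 9); case/orP: h => /eqP ->;
  [rewrite -[3 %/ 3]/1 | rewrite -[6 %/ 3]/2]; rewrite expn1; lia.
rewrite exq logn3 //; case/orP: h => /eqP ->;
  [rewrite -[3 %/ 3]/1 | rewrite -[6 %/ 3]/2]; rewrite dvdn_addr ?dvdn_mulr //.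
Qed.

Lemma per24 n :
  [/\ narayana (n + 24) %% 9 = narayana n %% 9,
      narayana (n + 25) %% 9 = narayana n.+1 %% 9 &
      narayana (n + 26) %% 9 = narayana n.+2 %% 9].
Proof.
elim: n => [|n [h0 h1 h2]]; first by vm_compute.
split.
- by have -> : n.+1 + 24 = n + 25 by lia.
- by have -> : n.+1 + 25 = n + 26 by lia.
have e1 : n.+1 + 26 = (n + 24).+3 by lia.
rewrite e1 !narayana_rec -modnDm.
have e2 : (n + 24).+2 = n + 26 by lia.
by rewrite e2 h2 h0 modnDm.
Qed.

Lemma per24m i : narayana i %% 9 = narayana (i %% 24) %% 9.
Proof.
rewrite {1}(divn_eq i 24); elim: (i %/ 24) => [|q IH]; first by rewrite mul0n add0n.
have e : q.+1 * 24 + i %% 24 = (q * 24 + i %% 24) + 24 by lia.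
by rewrite e; case: (per24 (q * 24 + i %% 24)) => -> _ _.
Qed.

Definition tbl := [seq (narayana r + 1) %% 9 | r <- iota 0 24].

Lemma tblE i : (narayana i + 1) %% 9 = nth 0 tbl (i %% 24).
Proof.
rewrite /tbl (nth_map 0) ?size_iota ?ltn_pmod // nth_iota ?ltn_pmod // add0n.
by rewrite -modnDml per24m modnDml.
Qed.

Lemma part1 i : i %% 8 != 4 -> logn 3 (narayana i + 1) = 0.
Proof.
move=> h; apply: logn3_0; rewrite tblE.
have H : all (fun r => (r %% 8 != 4) ==> (nth 0 tbl r %% 3 != 0)) (iota 0 24)
  by vm_compute.
move/allP: H => /(_ (i %% 24)); rewrite mem_iota add0n ltn_pmod //.
by rewrite modn_dvdm // h => /(_ isT).
Qed.

Lemma part2 i : (i %% 24 == 4) || (i %% 24 == 12) -> logn 3 (narayana i + 1) = 1.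
Proof.
move=> h; apply: logn3_1; rewrite tblE.
have H : all (fun r => ((r == 4) || (r == 12)) ==>
   ((nth 0 tbl r == 3) || (nth 0 tbl r == 6))) (iota 0 24)
  by vm_compute.
move/allP: H => /(_ (i %% 24)); rewrite mem_iota add0n ltn_pmod //.
by rewrite h => /(_ isT).
Qed.

(* ---------- the ring Z[t]/(t^3 - t^2 - 1) as triples (t^2, t, 1) ---------- *)
Section Ring3.
Local Open Scope Z_scope.

Definition R3 := (Z * Z * Z)%type.
Definition rmul (x y : R3) : R3 :=
  let '(p, q, s) := x in let '(p', q', s') := y in
  (p*p' + (p*q' + q*p') + (p*s' + q*q' + s*p'),
   p*p' + (q*s' + s*q'),
   p*p' + (p*q' + q*p') + s*s').
Definition radd (x y : R3) : R3 :=
  let '(p, q, s) := x in let '(p', q', s') := y in (p + p', q + q', s + s').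
Definition rsmul (c : Z) (x : R3) : R3 :=
  let '(p, q, s) := x in (c * p, c * q, c * s).
Definition rone : R3 := (0, 0, 1).
Definition rth : R3 := (0, 1, 0).
Fixpoint pw (n : nat) : R3 := match n with O => rone | S m => rmul rth (pw m) end.
Definition nu : R3 := (305, 142, 208).
Definition F (x : R3) : Z := let '(p, q, s) := x in p - s.

Lemma teq (a b c a' b' c' : Z) : a = a' -> b = b' -> c = c' -> (a, b, c) = (a', b', c').
Proof. by move=> -> -> ->. Qed.

Lemma rmulA x y z : rmul x (rmul y z) = rmul (rmul x y) z.
Proof. case: x => [[? ?] ?]; case: y => [[? ?] ?]; case: z => [[? ?] ?]; apply: teq; ring. Qed.

Lemma rmul1 x : rmul rone x = x.
Proof. case: x => [[? ?] ?]; apply: teq; ring. Qed.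

Lemma pw_add a b : pw (a + b) = rmul (pw a) (pw b).
Proof.
elim: a => [|a IH]; first by rewrite add0n rmul1.
by rewrite addSn -[pw (a + b).+1]/(rmul rth (pw (a + b))) IH rmulA.
Qed.

Lemma pw24 : pw 24 = radd rone (rsmul 9 nu).
Proof. by vm_compute. Qed.

Lemma id_base (n : Z) v r :
  let A := radd (rsmul n v) (rsmul 3 r) in
  rmul (radd rone (rsmul 9 A)) (radd rone (rsmul 9 v)) =
  radd rone (rsmul 9 (radd (rsmul (n + 1) v) (rsmul 3 (radd r (rsmul 3 (rmul A v)))))).
Proof. case: v => [[? ?] ?]; case: r => [[? ?] ?]; apply: teq; ring. Qed.

Lemma id_step (d n : Z) v r :
  let z := radd (rsmul n v) (rsmul 3 r) in
  let E := radd rone (rsmul (3 * d) z) in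
  rmul E (rmul E E) =
  radd rone (rsmul (9 * d) (radd (rsmul n v)
     (rsmul 3 (radd r (radd (rsmul d (rmul z z)) (rsmul (d * d) (rmul z (rmul z z)))))))).
Proof. case: v => [[? ?] ?]; case: r => [[? ?] ?]; apply: teq; ring. Qed.

Lemma F_lin (c n : Z) r :
  F (radd rone (rsmul c (radd (rsmul n nu) (rsmul 3 r)))) + 1 = c * (97 * n + 3 * F r).
Proof. case: r => [[? ?] ?]; rewrite /F /radd /rsmul /rone /nu; ring. Qed.

End Ring3.

Lemma lte k n : exists r, pw (24 * (3 ^ k * n)) =
  radd rone (rsmul (Z.of_nat (3 ^ k.+2)) (radd (rsmul (Z.of_nat n) nu) (rsmul 3 r))).
Proof.
elim: k n => [|k IH] n.
  rewrite expn0 mul1n -[Z.of_nat (3 ^ 2)]/9%Z.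
  elim: n => [|n [r IHn]]; first by exists (0, 0, 0)%Z; rewrite muln0; vm_compute.
  have -> : 24 * n.+1 = 24 * n + 24 by lia.
  rewrite pw_add IHn pw24 id_base.
  exists (radd r (rsmul 3 (rmul (radd (rsmul (Z.of_nat n) nu) (rsmul 3 r)) nu))).
  by have -> : Z.of_nat n.+1 = (Z.of_nat n + 1)%Z by lia.
have -> : 24 * (3 ^ k.+1 * n) = 24 * (3 ^ k * n) + (24 * (3 ^ k * n) + 24 * (3 ^ k * n)).
  rewrite expnS; lia.
case: (IH n) => r Hr.
set X := 24 * (3 ^ k * n) in Hr *.
rewrite pw_add [pw (X + X)]pw_add Hr.
have -> : Z.of_nat (3 ^ k.+2) = (3 * Z.of_nat (3 ^ k.+1))%Z by rewrite (expnS 3 k.+1); lia.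
rewrite id_step.
set d := Z.of_nat (3 ^ k.+1).
set z := radd (rsmul (Z.of_nat n) nu) (rsmul 3 r).
exists (radd r (radd (rsmul d (rmul z z)) (rsmul (d * d) (rmul z (rmul z z))))).
by have -> : Z.of_nat (3 ^ k.+3) = (9 * d)%Z by rewrite /d !expnS; lia.
Qed.

Lemma pw_nar N : pw N.+2 = (Z.of_nat (narayana N.+1),
  (Z.of_nat (narayana N.+2) - Z.of_nat (narayana N.+1))%Z, Z.of_nat (narayana N)).
Proof.
elim: N => [|N IH]; first by vm_compute.
rewrite -[pw N.+3]/(rmul rth (pw N.+2)) IH /rmul /rth; apply: teq;
  rewrite ?narayana_rec; lia.
Qed.

Lemma part3 i : i %% 24 = 20 -> logn 3 (narayana i + 1) = (logn 3 (i + 4)).+1.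
Proof.
move=> hi.
have ei : i = 24 * (i %/ 24) + 20 by rewrite {1}(divn_eq i 24) hi; lia.
set q := i %/ 24 in ei.
have m0 : 0 < q.+1 by [].
case: (pfactor_coprime (isT : prime 3) m0) => n0 cn0 em.
set k := logn 3 q.+1 in em.
have n3 : ~~ (3 %| n0) by rewrite -prime_coprime.
case: (lte k n0) => r Hr.
have e24 : 24 * (3 ^ k * n0) = (24 * q + 22).+2.
  by rewrite mulnC in em; rewrite -em; lia.
rewrite e24 pw_nar in Hr.
have HF := F_lin (Z.of_nat (3 ^ k.+2)) (Z.of_nat n0) r.
rewrite -Hr /F in HF.
have hrec := narayana_rec (24 * q + 20).
have e23 : (24 * q + 20).+3 = (24 * q + 22).+1 by lia.
have e22 : (24 * q + 20).+2 = 24 * q + 22 by lia.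
rewrite e23 e22 in hrec.
rewrite -ei in hrec.
set u0 := (97 * Z.of_nat n0 + 3 * F r)%Z in HF.
have HX : Z.of_nat (narayana i + 1) = (Z.of_nat (3 ^ k.+2) * u0)%Z.
  rewrite -HF hrec; lia.
have p0 : 0 < 3 ^ k.+2 by rewrite expn_gt0.
have P0 : (0 < Z.of_nat (3 ^ k.+2))%Z by lia.
have U0 : (0 < u0)%Z by nia.
have ex : narayana i + 1 = 3 ^ k.+2 * Z.to_nat u0.
  apply: Nat2Z.inj; rewrite HX -multE Nat2Z.inj_mul Z2Nat.id //; lia.
have nd : ~~ (3 %| Z.to_nat u0).
  apply/negP => /dvdnP [w ew].
  have : (u0 = Z.of_nat (w * 3))%Z by rewrite -ew Z2Nat.id //; lia.
  rewrite /u0 => hw; move/negP: n3; apply; lia.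
rewrite ex logn3 //.
have -> : i + 4 = 3 ^ k.+1 * (8 * n0).
  rewrite expnS ei; set t := 3 ^ k in em *; lia.
rewrite logn3 // Euclid_dvdM //.
Qed.

Theorem theorem3p6 (i : nat) : 1 <= i ->
  (i %% 8 != 4 -> logn 3 (narayana i + 1) = 0) /\
  ((i %% 24 == 4) || (i %% 24 == 12) -> logn 3 (narayana i + 1) = 1) /\
  (i %% 24 = 20 -> logn 3 (narayana i + 1) = (logn 3 (i + 4)).+1).
Proof.
move=> _; split; first exact: part1.
split; [exact: part2 | exact: part3].
Qed.
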